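(* Let $\mathfrak S$ be a commutative semiring with multiplicative identity $1$ whose Jacobson radical (the intersection of all maximal ideals) is the zero ideal. Let $\sigma_{\mathfrak S}$ be a set of ideals of $\mathfrak S$ containing all maximal ideals of $\mathfrak S$, endowed with the ideal topology, and let $\mathcal S=\{\mathfrak a^{\uparrow}\mid \mathfrak a \text{ an ideal of }\mathfrak S\}$ be its subbase of closed sets. If $\mathcal S$ strongly disconnects $\sigma_{\mathfrak S}$, then $\mathfrak S$ has a non-trivial idempotent element, i.e. some $e\in\mathfrak S$ with $e^2=e$, $e\neq0$, $e\neq1$.
   Context: A semiring $(\mathfrak S,+,0,\cdot,1)$ has $(\mathfrak S,+,0)$ a commutative monoid, $(\mathfrak S,\cdot,1)$ a monoid, $0r=r0=0$, and two-sided distributivity; all semirings are commutative. An ideal is a nonempty proper subset closed under addition and under multiplication by elements of $\mathfrak S$; maximal means not properly contained in another ideal. For an ideal $\mathfrak a$, $\mathfrak a^{\uparrow}=\{\mathfrak x\in\sigma_{\mathfrak S}\mid\mathfrak a\subseteq\mathfrak x\}$; the ideal topology has these sets as a subbasis of closed sets. A closed subbase $\mathcal S$ of a space $X$ strongly disconnects $X$ if there exist non-empty $A,B\in\mathcal S$ with $X=A\cup B$ and $A\cap B=\emptyset$. *)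

(* Defs.v *)
From HB Require Import structures.
From mathcomp Require Import all_boot all_algebra.
From mathcomp Require Import boolp classical_sets.
Set Implicit Arguments. Unset Strict Implicit. Unset Printing Implicit Defensive.
Import GRing.Theory.
Local Open Scope classical_set_scope.
Local Open Scope ring_scope.

(* Semirings: commutative semirings with 0 and 1 (possibly 0 = 1), i.e.
   MathComp's comPzSemiRingType. *)

Definition is_ideal (R : comPzSemiRingType) (a : set R) : Prop :=
  [/\ a !=set0, a <> setT,
      (forall x y, a x -> a y -> a (x + y)) &
      (forall r x, a x -> a (r * x))].

Definition is_maximal_ideal (R : comPzSemiRingType) (m : set R) : Prop :=
  is_ideal m /\ (forall b : set R, is_ideal b -> m `<=` b -> b = m).

Definition jacobson_radical (R : comPzSemiRingType) : set R :=
  [set x | forall m : set R, is_maximal_ideal m -> m x].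

Definition up_set (R : comPzSemiRingType) (sigma : set (set R)) (a : set R)
  : set (set R) := [set x | sigma x /\ a `<=` x].

Definition ideal_subbase (R : comPzSemiRingType) (sigma : set (set R))
  : set (set (set R)) := [set up_set sigma a | a in [set a : set R | is_ideal a]].

Definition strongly_disconnects (T : Type) (X : set T) (S : set (set T)) : Prop :=
  exists A B, [/\ S A /\ S B, A !=set0, B !=set0, X = A `|` B & A `&` B = set0].

(* Main.v *)
Require Import Defs.
From HB Require Import structures.
From mathcomp Require Import all_boot all_algebra.
From mathcomp Require Import boolp classical_sets.
Import GRing.Theory.
Local Open Scope classical_set_scope.
Local Open Scope ring_scope.

Lemma ideal_no1 (R : comPzSemiRingType) (J : set R) : is_ideal J -> ~ J 1.
Proof.
case=> _ JT _ Jm J1; apply: JT; apply/seteqP; split => // r _.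
by rewrite -(mulr1 r); apply: Jm.
Qed.

Lemma ideal0 (R : comPzSemiRingType) (J : set R) : is_ideal J -> J 0.
Proof. by case=> -[x Jx] _ _ Jm; rewrite -(mul0r x); apply: Jm. Qed.

Lemma mk_ideal (R : comPzSemiRingType) (J : set R) :
  J !=set0 -> ~ J 1 -> (forall x y, J x -> J y -> J (x + y)) ->
  (forall r x, J x -> J (r * x)) -> is_ideal J.
Proof. by move=> ne n1 Ja Jm; split => // JT; apply: n1; rewrite JT. Qed.

Arguments ideal_no1 {R J}.
Arguments ideal0 {R J}.
Arguments mk_ideal {R J}.

Lemma ex_maximal (R : comPzSemiRingType) (I : set R) :
  is_ideal I -> exists m, is_maximal_ideal m /\ I `<=` m.
Proof.
move=> iI.
pose P := [set J : set R | J = set0 \/ (is_ideal J /\ I `<=` J)].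
have := @Zorn_bigcup R P.
case.
  move=> F FP Ftot.
  have [[z [X FX Xz]]|N] := pselect ((\bigcup_(X in F) X) !=set0); last first.
    left; apply/seteqP; split => // w Fw; by exfalso; apply: N; exists w.
  have ideF : forall Y, F Y -> Y !=set0 -> is_ideal Y /\ I `<=` Y.
    move=> Y FY [w Yw]; case: (FP _ FY) => // Y0; by rewrite Y0 in Yw.
  have [iX IX] := ideF X FX (ex_intro _ z Xz).
  right; split; last first.
    by move=> w Iw; exists X => //; apply: IX.
  apply: mk_ideal.
  - by exists z, X.
  - case=> Y FY Y1; have [iY _] := ideF Y FY (ex_intro _ 1 Y1). exact: (ideal_no1 iY Y1).
  - move=> u v [Y1 F1 Y1u] [Y2 F2 Y2v].
    have [iY1 _] := ideF Y1 F1 (ex_intro _ u Y1u).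
    have [iY2 _] := ideF Y2 F2 (ex_intro _ v Y2v).
    case: (Ftot _ _ F1 F2) => S12.
    + exists Y2 => //; case: iY2 => _ _ Ja _; apply: Ja => //; exact: S12.
    + exists Y1 => //; case: iY1 => _ _ Ja _; apply: Ja => //; exact: S12.
  - move=> r u [Y FY Yu]; have [[_ _ _ Jm] _] := ideF Y FY (ex_intro _ u Yu).
    by exists Y => //; apply: Jm.
move=> A [PA Amax].
have PI : I = set0 \/ (is_ideal I /\ I `<=` I) by right; split.
case: PA => [A0|[iA IA]].
  exfalso; apply: (Amax I) => //; rewrite A0; split; first by [].
  have [w Iw] : I !=set0 by case: iI.
  by move=> E; have := E w Iw.
exists A; split => //; split => // b ib Ab.
apply: contrapT => bA; apply: (Amax b).
  by split => // E; apply: bA; apply/seteqP; split.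
by right; split => //; apply: subset_trans Ab.
Qed.

Arguments ex_maximal {R I}.

Theorem proposition3p11 (R : comPzSemiRingType) (sigma : set (set R)) :
  @jacobson_radical R = [set 0] ->
  (forall x, sigma x -> is_ideal x) ->
  (forall m, is_maximal_ideal m -> sigma m) ->
  strongly_disconnects sigma (ideal_subbase sigma) ->
  exists e : R, [/\ e * e = e, e != 0 & e != 1].
Proof.
move=> Jac sigI maxS [A [B [[[a ia <-] [b ib <-]] _ _ sU sI]]].
have a1 := ideal_no1 ia; have b1 := ideal_no1 ib.
case: (ia) => _ _ aD aM; case: (ib) => _ _ bD bM.
have a0 := ideal0 ia; have b0 := ideal0 ib.
have [x [y [ax bY xy1]]] : exists x y, [/\ a x, b y & x + y = 1].
  apply: contrapT => N.
  pose c := [set z | exists x y, [/\ a x, b y & z = x + y]].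
  have ic : is_ideal c.
    apply: mk_ideal.
    - by exists (0 + 0), 0, 0.
    - by case=> u [v [au bv e]]; apply: N; exists u, v.
    - move=> _ _ [u [v [au bv ->]]] [u' [v' [au' bv' ->]]].
      by exists (u + u'), (v + v'); split; [exact: aD|exact: bD|rewrite addrACA].
    - move=> r _ [u [v [au bv ->]]].
      by exists (r * u), (r * v); split; [exact: aM|exact: bM|rewrite mulrDr].
  have [m [mm cm]] := ex_maximal ic.
  have sm := maxS _ mm.
  have : (up_set sigma a `&` up_set sigma b) m.
    split; split => // w hw; apply: cm.
    + by exists w, 0; rewrite addr0.
    + by exists 0, w; rewrite add0r.
  by rewrite sI.
have xy0 : x * y = 0.
  have : jacobson_radical (R:=R) (x * y); last by rewrite Jac => ->.
  move=> m mm; have := maxS _ mm; rewrite sU => -[[_ am]|[_ bm]].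
  + by apply: am; rewrite mulrC; exact: aM.
  + by apply: bm; exact: bM.
exists x; split.
- by rewrite -[RHS]mulr1 -xy1 mulrDr xy0 addr0.
- by apply/eqP => x0; apply: b1; rewrite -xy1 x0 add0r.
- by apply/eqP => x1; apply: a1; rewrite -x1.
Qed.
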